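(* Let $A \in \mathbb{Q}^{m\times n}$, $b \in \mathbb{Q}^m$, and $E = [c_1,d_1]\cup\cdots\cup[c_k,d_k]$ with $0 = c_1 < d_1 < c_2 < \cdots < c_k < d_k = 1$. Let $\sigma \in [k]^n$ be such that the box $\prod_{i=1}^n [c_{\sigma_i}, d_{\sigma_i}]$ is disjoint from $K_1 = \{x \in [0,1]^n : Ax \le b\}$. Let $K_2 = \{ p \in [0,1]^{n\times k} : \sum_{i,j} p_{ij} = 1,\ p_{ij} \ge 0,\ p_{i\sigma_i} = 0 \ \forall i\}$ and \[ f(x,p) = \sum_{i=1}^n \sum_{j=1}^k p_{ij}\left[(1-x_i)\frac{U_0(j)}{U_0(\sigma_i)} + x_i\frac{U_1(j)}{U_1(\sigma_i)}\right]. \] Then for every $x \in K_1$ there exists $p \in K_2$ with $f(x,p) \ge 1$.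
   Context: For $i \in [k]$, $U_0(i) = \prod_{j=1}^{i-1} \frac{1 - c_{j+1}}{1 - d_j}$ and $U_1(i) = \prod_{l=i}^{k-1} \frac{d_l}{c_{l+1}}$ (empty products equal $1$). *)

(* Defs.v *)
From mathcomp Require Import all_boot all_order all_algebra.
Set Implicit Arguments. Unset Strict Implicit. Unset Printing Implicit Defensive.
Import Order.TTheory GRing.Theory Num.Theory.
Local Open Scope ring_scope.

(* Conventions: indices of the intervals [c_j, d_j] are 1-based naturals
   j = 1..k; c d : nat -> R (values outside 1..k are irrelevant).
   Coordinates i range over 'I_n. *)

Definition U0 (R : realFieldType) (c d : nat -> R) (i : nat) : R :=
  \prod_(1 <= j < i) ((1 - c j.+1) / (1 - d j)).

Definition U1 (R : realFieldType) (k : nat) (c d : nat -> R) (i : nat) : R :=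
  \prod_(i <= l < k) (d l / c l.+1).

Definition valid_intervals (R : realFieldType) (k : nat) (c d : nat -> R) : Prop :=
  (0 < k)%N /\ c 1%N = 0 /\ d k = 1 /\
  (forall j, (1 <= j <= k)%N -> c j < d j) /\
  (forall j, (1 <= j < k)%N -> d j < c j.+1).

Definition K1 (R : realFieldType) (m n : nat) (A : 'M[rat]_(m, n))
  (b : 'cV[rat]_m) (x : 'I_n -> R) : Prop :=
  (forall i, 0 <= x i <= 1) /\
  (forall r : 'I_m, \sum_(i < n) ratr (A r i) * x i <= ratr (b r 0)).

Definition in_box (R : realFieldType) (n : nat) (c d : nat -> R)
  (sigma : 'I_n -> nat) (x : 'I_n -> R) : Prop :=
  forall i, c (sigma i) <= x i <= d (sigma i).

Definition K2 (R : realFieldType) (n k : nat) (sigma : 'I_n -> nat)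
  (p : 'I_n -> nat -> R) : Prop :=
  (forall i j, (1 <= j <= k)%N -> 0 <= p i j <= 1) /\
  \sum_(i < n) \sum_(1 <= j < k.+1) p i j = 1 /\
  (forall i, p i (sigma i) = 0).

Definition f_obj (R : realFieldType) (n k : nat) (c d : nat -> R)
  (sigma : 'I_n -> nat) (x : 'I_n -> R) (p : 'I_n -> nat -> R) : R :=
  \sum_(i < n) \sum_(1 <= j < k.+1)
     p i j * ((1 - x i) * (U0 c d j / U0 c d (sigma i))
              + x i * (U1 k c d j / U1 k c d (sigma i))).

(* Main.v *)
Require Import Defs.
From mathcomp Require Import all_boot all_order all_algebra.
From mathcomp Require Import ring lra zify.
Import Order.TTheory GRing.Theory Num.Theory.
Local Open Scope ring_scope.

Section S.
Variables (R : realFieldType) (k : nat) (c d : nat -> R).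
Hypothesis V : valid_intervals k c d.

Lemma mono i t : (1 <= i)%N -> (i + t <= k)%N -> c i <= c (i + t) /\ d i <= d (i + t).
Proof.
case: V => [k0 [c1 [dk [cd dc]]]] i1.
elim: t => [|t IH] h; first by rewrite addn0.
have [h1 h2] := IH ltac:(lia).
have e1 := cd (i + t)%N ltac:(lia).
have e2 := dc (i + t)%N ltac:(lia).
have e3 := cd (i + t).+1 ltac:(lia).
rewrite addnS; split; lra.
Qed.

Lemma facts j : (1 <= j <= k)%N ->
  (0 <= c j /\ c j < 1 /\ 0 < d j /\ d j <= 1) /\ ((1 < j)%N -> 0 < c j) /\ ((j < k)%N -> d j < 1).
Proof.
move=> /andP[j1 jk].
have V' := V; case: V' => [k0 [c1 [dk [cd dc]]]].
have [m1 _] := @mono 1 (j - 1)%N (leqnn 1) ltac:(lia).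
have [_ m2] := @mono _ (k - j)%N j1 ltac:(lia).
rewrite addnBA // addKn in m1. rewrite subnKC // in m2.
rewrite c1 in m1. rewrite dk in m2.
have e := cd j ltac:(lia).
split; first (split; [lra|split;[lra|split;lra]]).
split.
- move=> h. have e2 := dc j.-1 ltac:(lia). have e3 := cd j.-1 ltac:(lia).
  have [m3 _] := @mono _ (j.-1 - 1)%N (leqnn 1) ltac:(lia).
  rewrite addnBA ?c1 in m3; last lia.
  rewrite prednK in e2; last lia.
  rewrite (_ : (1 + j.-1 - 1 = j.-1)%N) in m3; last lia. lra.
- move=> h. have e2 := dc j ltac:(lia). have e3 := cd j.+1 ltac:(lia).
  have [_ m3] := @mono _ (k - j.+1)%N (isT : (1 <= j.+1)%N) ltac:(lia).
  rewrite subnKC // dk in m3. lra.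
Qed.
End S.
Section S2.
Variables (R : realFieldType) (k : nat) (c d : nat -> R).
Hypothesis V : valid_intervals k c d.

Lemma U0pos t : (t <= k)%N -> 0 < U0 c d t.
Proof.
move=> tk; rewrite /U0 big_seq; apply: prodr_gt0 => j; rewrite mem_iota => hj.
have [[_ [h1 _]] _] := @facts R k c d V (j.+1) ltac:(lia).
have [_ [_ h2]] := @facts R k c d V (j) ltac:(lia).
have h3 := h2 ltac:(lia).
apply: divr_gt0; lra.
Qed.

Lemma U1pos t : (1 <= t)%N -> 0 < U1 k c d t.
Proof.
move=> t1; rewrite /U1 big_seq; apply: prodr_gt0 => j; rewrite mem_iota => hj.
have [_ [h1 _]] := @facts R k c d V (j.+1) ltac:(lia).
have [[_ [_ [h2 _]]] _] := @facts R k c d V (j) ltac:(lia).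
have h3 := h1 ltac:(lia).
apply: divr_gt0; lra.
Qed.

Lemma U0S t : (1 <= t)%N -> U0 c d t.+1 = U0 c d t * ((1 - c t.+1) / (1 - d t)).
Proof. by move=> t1; rewrite /U0 big_nat_recr. Qed.

Lemma U1S t : (t < k)%N -> U1 k c d t = (d t / c t.+1) * U1 k c d t.+1.
Proof. by move=> t1; rewrite /U1 big_ltn. Qed.
End S2.

Lemma single (R : realFieldType) n k (i0 : 'I_n) j0 (F : 'I_n -> nat -> R) :
  (1 <= j0 <= k)%N ->
  \sum_(i < n) \sum_(1 <= j < k.+1)
     (if i == i0 then if j == j0 then 1 else 0 else 0) * F i j = F i0 j0.
Proof.
move=> hj; rewrite (bigD1 i0) //=.
rewrite [X in _ + X]big1 => [|i ne]; last first.
  by rewrite (negbTE ne) big1 // => j _; rewrite mul0r.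
rewrite addr0 eqxx.
rewrite (eq_bigr (fun j => if j == j0 then F i0 j else 0)); last first.
  by move=> j _; case: eqP; rewrite ?mul1r ?mul0r.
rewrite -big_mkcond big_nat1_eq.
have -> : (1 <= j0 < k.+1)%N by lia. by [].
Qed.
Lemma ineq1 (R : realFieldType) (D C x u v : R) : 0 < D -> D < C -> C < 1 -> 0 <= x -> x <= C ->
  0 < u -> 0 < v ->
  1 <= (1 - x) * (u / (u * ((1 - C) / (1 - D)))) + x * ((D / C * v) / v).
Proof.
move=> h1 h2 h3 h4 h5 h6 h7.
have e : (1 - x) * (u / (u * ((1 - C) / (1 - D)))) + x * ((D / C * v) / v)
   = 1 + (C - x) * (C - D) / (C * (1 - C)).
  by field; rewrite !subr_eq0; apply/and5P; split; rewrite ?lt0r_neq0 // ?gt_eqF // ?lt_eqF //; lra.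
rewrite e lerDl; apply: divr_ge0; [apply: mulr_ge0|apply: mulr_ge0]; lra.
Qed.

Lemma ineq2 (R : realFieldType) (D C x u v : R) : 0 < D -> D < C -> C < 1 -> D <= x ->
  0 < u -> 0 < v ->
  1 <= (1 - x) * ((u * ((1 - C) / (1 - D))) / u) + x * (v / (D / C * v)).
Proof.
move=> h1 h2 h3 h4 h6 h7.
have e : (1 - x) * ((u * ((1 - C) / (1 - D))) / u) + x * (v / (D / C * v))
   = 1 + (x - D) * (C - D) / (D * (1 - D)).
  by field; rewrite !subr_eq0; apply/and5P; split; rewrite ?lt0r_neq0 // ?gt_eqF // ?lt_eqF //; lra.
rewrite e lerDl; apply: divr_ge0; [apply: mulr_ge0|apply: mulr_ge0]; lra.
Qed.
Theorem claim3p2 (R : realFieldType) (m n k : nat)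
  (A : 'M[rat]_(m, n)) (b : 'cV[rat]_m) (c d : nat -> R)
  (sigma : 'I_n -> nat) :
  valid_intervals k c d ->
  (forall i, (1 <= sigma i <= k)%N) ->
  ~ (exists x : 'I_n -> R, in_box c d sigma x /\ K1 A b x) ->
  forall x : 'I_n -> R, K1 A b x ->
  exists p : 'I_n -> nat -> R, K2 k sigma p /\ 1 <= f_obj k c d sigma x p.
Proof.
move=> V hs nobox x hx.
have : ~~ [forall i, (c (sigma i) <= x i <= d (sigma i))].
  apply/negP => /forallP H; apply: nobox; exists x; split => //.
move/forallPn => [i0]; rewrite negb_and -!ltNge => /orP Hi.
have V' := V; case: V' => [k0 [c1 [dk _]]].
have [x0 x1] : 0 <= x i0 /\ x i0 <= 1 by case: hx => h _; case/andP: (h i0).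
pose mk (j0 : nat) := fun (i : 'I_n) (j : nat) => if i == i0 then if j == j0 then (1:R) else 0 else 0.
have K2mk : forall j0, (1 <= j0 <= k)%N -> j0 != sigma i0 -> K2 k sigma (mk j0).
  move=> j0 hj0 ne; split; last split.
  - by move=> i j _; rewrite /mk; case: (i == i0); case: (j == j0); rewrite ?lexx ?ler01.
  - rewrite -(@single R n k i0 j0 (fun _ _ => (1:R)) hj0); apply: eq_bigr => i _; apply: eq_bigr => j _.
    by rewrite mulr1.
  - move=> i; rewrite /mk; case: (altP (i =P i0)) => [->|] //; by rewrite eq_sym (negbTE ne).
have fmk : forall j0, (1 <= j0 <= k)%N -> f_obj k c d sigma x (mk j0) =
   (1 - x i0) * (U0 c d j0 / U0 c d (sigma i0)) + x i0 * (U1 k c d j0 / U1 k c d (sigma i0)).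
  by move=> j0 hj0; rewrite /f_obj (@single R n k i0 j0 (fun i j => (1 - x i) * (U0 c d j / U0 c d (sigma i))
              + x i * (U1 k c d j / U1 k c d (sigma i))) hj0).
have hsi := hs i0.
case: Hi => H.
-
  have s2 : (1 < sigma i0)%N.
    case: (ltnP 1 (sigma i0)) => // h; have e : sigma i0 = 1%N by lia.
    by move: H; rewrite e c1 ltNge x0.
  set t := (sigma i0).-1.
  have st : sigma i0 = t.+1 by rewrite /t prednK //; lia.
  have ht : (1 <= t <= k)%N by lia.
  exists (mk t); split.
    by apply: K2mk => //; rewrite st; apply/eqP; lia.
  have t1 : (1 <= t)%N by lia. have tk : (t < k)%N by lia.
  rewrite fmk // st (@U0S R c d t t1) (@U1S R k c d t tk).
  have [[_ [_ [hd _]]] [_ hd1]] := @facts R k c d V t ht.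
  have [[_ [hc1 _]] [hc0 _]] := @facts R k c d V t.+1 ltac:(lia).
  have := hc0 ltac:(lia) => hc0'.
  have := V; case=> [_ [_ [_ [_ dc]]]].
  have := dc t ltac:(lia) => hdc.
  rewrite st in H; apply: ineq1 => //; try lra.
  + by apply: (@U0pos R k c d V); lia.
  + by apply: (@U1pos R k c d V); lia.
-
  set t := sigma i0 in H hsi *.
  have tk : (t < k)%N.
    case: (ltnP t k) => // h; have e : t = k by lia.
    by move: H; rewrite e dk ltNge x1.
  have ht : (1 <= t <= k)%N by lia.
  exists (mk t.+1); split.
    by apply: K2mk; [lia | apply/eqP; lia].
  rewrite fmk; last lia.
  have t1 : (1 <= t)%N by lia.
  rewrite (@U0S R c d t t1) (@U1S R k c d t tk).
  have [[hc [_ [hd _]]] _] := @facts R k c d V t ht.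
  have [[_ [hc1 _]] _] := @facts R k c d V t.+1 ltac:(lia).
  have := V; case=> [_ [_ [_ [cd dc]]]].
  have := dc t ltac:(lia) => hdc.
  have := cd t ht => hcd.
  apply: ineq2 => //; try lra.
  + by apply: (@U0pos R k c d V); lia.
  + by apply: (@U1pos R k c d V); lia.
Qed.
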